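(* Let $\mathbf{v}_1,\mathbf{r}_u,\mathbf{r}_v\in\mathbb{R}^3$ with $\mathbf{r}_u,\mathbf{r}_v$ linearly independent, let $\mathbf{n}=\mathbf{r}_u\times\mathbf{r}_v/|\mathbf{r}_u\times\mathbf{r}_v|$, and let $\mathbf{r}_q(u,v)=\mathbf{r}_u u+\mathbf{r}_v v+\mathbf{v}_1$. Let $A$ be the $3\times3$ matrix with columns $\mathbf{r}_u,\mathbf{r}_v,\mathbf{n}$ (so that $\mathbf{r}_q(u,v)=A(u,v,0)^T+\mathbf{v}_1$), let $a_{s,t}$ denote the $(s,t)$ entry of $A^{-1}$, $\mathbf{a}_s$ the $s$-th row of $A^{-1}$, $\alpha_s^{(\pm)}=a_{s,1}\pm i\,a_{s,2}$ and $\beta_s=\mathbf{a}_s\cdot\mathbf{v}_1$. For a vector $\mathbf{w}=(w_x,w_y,w_z)^T$ write $\xi(\mathbf{w})=(w_x+iw_y)/2$, $\eta(\mathbf{w})=(w_x-iw_y)/2$, and set $\xi_0=\xi(\mathbf{v}_1)$, $\xi_v=\xi(\mathbf{r}_v)$, $\eta_0=\eta(\mathbf{v}_1)$, $\eta_v=\eta(\mathbf{r}_v)$, $z_0=v_{1,z}$, $z_v=r_{v,z}$ (the $z$-components of $\mathbf{v}_1$ and $\mathbf{r}_v$). For integers $n$, $m$, $b$, $c$ define $$Q_{n,b}^{m,c}(u,v)=R_n^m(\mathbf{r}_q(u,v))\,u^b v^c,\qquad j_{n,b}^{m,c}=\int_0^1 Q_{n,b}^{m,c}(u,1-u)\,du,\qquad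 q_{n,b}^{m,c}=Q_{n,b}^{m,c}(1,0),$$ with the convention that $j_{n,b}^{m,c}$ and $q_{n,b}^{m,c}$ are zero whenever $n<0$ or $|m|>n$ (terms whose index $b$ or $c$ is negative appear only multiplied by $b=0$ or $c=0$ and are then taken as zero). Then for all integers $n\ge0$, $|m|\le n$, $b\ge0$, $c\ge0$, $$\begin{aligned} (n+b+c+1)\,j_{n,b}^{m,c}=\;&(\xi_0+\xi_v)\big(i\,j_{n-1,b}^{m-1,c}+b\,\alpha_1^{(-)} j_{n,b-1}^{m,c}+c\,\alpha_2^{(-)} j_{n,b}^{m,c-1}\big)\\ &+(\eta_0+\eta_v)\big(i\,j_{n-1,b}^{m+1,c}+b\,\alpha_1^{(+)} j_{n,b-1}^{m,c}+c\,\alpha_2^{(+)} j_{n,b}^{m,c-1}\big)\\ &+(z_0+z_v)\big(-j_{n-1,b}^{m,c}+b\,a_{13}\, j_{n,b-1}^{m,c}+c\,a_{23}\, j_{n,b}^{m,c-1}\big)\\ &-b\,\beta_1\, j_{n,b-1}^{m,c}-c\,\beta_2\, j_{n,b}^{m,c-1}+q_{n,b}^{m,c}. \end{aligned}$$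
   Context: The regular solid harmonics are defined for $n=0,1,2,\dots$, $m=-n,\dots,n$ by $$R_n^m(\mathbf{r})=\frac{(-1)^n i^{|m|}}{(n+|m|)!}\,r^n P_n^{|m|}(\cos\theta)\,e^{im\varphi},$$ where $(r,\theta,\varphi)$ are the spherical coordinates of $\mathbf{r}=(x,y,z)^T=r(\sin\theta\cos\varphi,\sin\theta\sin\varphi,\cos\theta)^T$, and for $m\ge 0$, $P_n^m(\mu)=\frac{(-1)^m(1-\mu^2)^{m/2}}{2^n n!}\frac{d^{m+n}}{d\mu^{m+n}}(\mu^2-1)^n$ are the associated Legendre functions. $R_n^m$ is taken to be $0$ when $|m|>n$ or $n<0$. *)

(* Defs.v *)
From Stdlib Require Import Reals ZArith.
From Coquelicot Require Import Coquelicot.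

Open Scope R_scope.

Record vec3 := V3 { vx : R; vy : R; vz : R }.

Definition vadd (a b : vec3) : vec3 := V3 (vx a + vx b) (vy a + vy b) (vz a + vz b).
Definition vscal (k : R) (a : vec3) : vec3 := V3 (k * vx a) (k * vy a) (k * vz a).
Definition vdot (a b : vec3) : R := vx a * vx b + vy a * vy b + vz a * vz b.
Definition vnorm (a : vec3) : R := sqrt (vdot a a).
Definition vcross (a b : vec3) : vec3 :=
  V3 (vy a * vz b - vz a * vy b) (vz a * vx b - vx a * vz b) (vx a * vy b - vy a * vx b).
Definition vzero : vec3 := V3 0 0 0.

Definition vcomp (a : vec3) (t : nat) : R :=
  match t with 1%nat => vx a | 2%nat => vy a | _ => vz a end.

Definition lin_indep2 (a b : vec3) : Prop :=
  forall k l : R, vadd (vscal k a) (vscal l b) = vzero -> k = 0 /\ l = 0.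

Definition nvec (ru rv : vec3) : vec3 := vscal (/ vnorm (vcross ru rv)) (vcross ru rv).

Definition Amat (ru rv : vec3) (s t : nat) : R :=
  match t with
  | 1%nat => vcomp ru s
  | 2%nat => vcomp rv s
  | _ => vcomp (nvec ru rv) s
  end.

Definition delta (s t : nat) : R := if Nat.eqb s t then 1 else 0.

Definition is_inverse3 (M B : nat -> nat -> R) : Prop :=
  forall s t : nat, (1 <= s <= 3)%nat -> (1 <= t <= 3)%nat ->
    B s 1%nat * M 1%nat t + B s 2%nat * M 2%nat t + B s 3%nat * M 3%nat t = delta s t /\
    M s 1%nat * B 1%nat t + M s 2%nat * B 2%nat t + M s 3%nat * B 3%nat t = delta s t.

Definition legendreP (n m : nat) (mu : R) : R :=
  (-1) ^ m * (sqrt (1 - mu ^ 2)) ^ m / (2 ^ n * INR (fact n))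
  * Derive_n (fun t => (t ^ 2 - 1) ^ n) (m + n) mu.

(* e^{i phi} for the azimuthal angle phi of w: (cos phi, sin phi) = (x, y)/rho;
   on the z-axis (rho = 0) phi is arbitrary and we take phi = 0. *)
Definition eiphi (w : vec3) : C :=
  let rho := sqrt (vx w ^ 2 + vy w ^ 2) in
  if Req_EM_T rho 0 then RtoC 1 else (vx w / rho, vy w / rho).

Definition eimphi (m : Z) (w : vec3) : C :=
  if Z.leb 0 m then Cpow (eiphi w) (Z.abs_nat m)
  else Cpow (Cconj (eiphi w)) (Z.abs_nat m).

Definition solidR (n m : Z) (w : vec3) : C :=
  if orb (Z.ltb n 0) (Z.ltb n (Z.abs m)) then RtoC 0 else
  let nn := Z.to_nat n in
  let am := Z.abs_nat m in
  let r := vnorm w in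
  Cmult (Cmult (Cmult (RtoC ((-1) ^ nn)) (Cpow Ci am))
               (RtoC (/ INR (fact (nn + am)) * r ^ nn * legendreP nn am (vz w / r))))
        (eimphi m w).

Definition rq (v1 ru rv : vec3) (u v : R) : vec3 :=
  vadd (vadd (vscal u ru) (vscal v rv)) v1.

Definition Qf (v1 ru rv : vec3) (n m : Z) (b c : nat) (u v : R) : C :=
  Cmult (solidR n m (rq v1 ru rv u v)) (RtoC (u ^ b * v ^ c)).

(* j_{n,b}^{m,c} = int_0^1 Q(u, 1-u) du  (zero if n<0 or |m|>n since R is) *)
Definition jint (v1 ru rv : vec3) (n m : Z) (b c : nat) : C :=
  RInt (V := C_R_CompleteNormedModule) (fun u => Qf v1 ru rv n m b c u (1 - u)) 0 1.

Definition qval (v1 ru rv : vec3) (n m : Z) (b c : nat) : C :=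
  Qf v1 ru rv n m b c 1 0.

Definition xi (w : vec3) : C := (vx w / 2, vy w / 2).
Definition eta (w : vec3) : C := (vx w / 2, - vy w / 2).

Definition alphaP (Ainv : nat -> nat -> R) (s : nat) : C := (Ainv s 1%nat, Ainv s 2%nat).
Definition alphaM (Ainv : nat -> nat -> R) (s : nat) : C := (Ainv s 1%nat, - Ainv s 2%nat).
Definition beta (Ainv : nat -> nat -> R) (v1 : vec3) (s : nat) : R :=
  Ainv s 1%nat * vx v1 + Ainv s 2%nat * vy v1 + Ainv s 3%nat * vz v1.

(* Main.v *)
Require Import Defs.
From Stdlib Require Import Reals ZArith.
From Coquelicot Require Import Coquelicot.
From Stdlib Require Import Lia Lra FunctionalExtensionality.
Open Scope C_scope.

Open Scope R_scope.

Lemma is_derive_eq (f : R -> R) (x l l' : R) : is_derive f x l -> l = l' -> is_derive f x l'.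
Proof. intros H <-; exact H. Qed.

Lemma Rd_plus (f g : R -> R) (x a b : R) : is_derive f x a -> is_derive g x b ->
  is_derive (fun t => f t + g t) x (a + b).
Proof. intros. exact (is_derive_plus (K:=R_AbsRing) (V:=R_NormedModule) f g x a b H H0). Qed.

Lemma Rd_mult (f g : R -> R) (x a b : R) : is_derive f x a -> is_derive g x b ->
  is_derive (fun t => f t * g t) x (a * g x + f x * b).
Proof. intros; apply Derive.is_derive_mult; auto. Qed.

Lemma Rd_const (c x : R) : is_derive (fun _ => c) x 0.
Proof. exact (is_derive_const (K:=R_AbsRing) (V:=R_NormedModule) c x). Qed.

Lemma Rd_id (x : R) : is_derive (fun t => t) x 1.
Proof. exact (is_derive_id (K:=R_AbsRing) x). Qed.

Fixpoint T (n j : nat) (t : R) : R :=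
  match n with
  | O => if Nat.eqb j 0 then 1 else 0
  | S n' => (t ^ 2 - 1) * T n' j t + 2 * INR j * t * T n' (j - 1) t
            + INR j * INR (j - 1) * T n' (j - 2) t
  end.

Lemma T_tower n : forall j (t : R), is_derive (T n j) t (T n (S j) t).
Proof.
  induction n as [|n IH]; intros j t.
  - simpl. apply is_derive_eq with 0. apply Rd_const. destruct j; reflexivity.
  - cbn [T].
    eapply is_derive_eq.
    + apply Rd_plus; [apply Rd_plus|].
      * apply Rd_mult; [|apply IH].
        apply Rd_plus. apply (is_derive_pow (fun t => t) 2 t 1), Rd_id. apply Rd_const.
      * apply Rd_mult; [|apply IH].
        apply (Rd_mult (fun _ => 2 * INR j) (fun t => t)); [apply Rd_const|apply Rd_id].
      * apply Rd_mult; [apply Rd_const|apply IH].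
    + destruct j as [|[|j]].
      * simpl. ring.
      * simpl. ring.
      * replace (S (S j) - 1)%nat with (S j) by lia.
        replace (S (S j) - 2)%nat with j by lia.
        replace (S (S (S j)) - 1)%nat with (S (S j)) by lia.
        replace (S (S (S j)) - 2)%nat with (S j) by lia.
        rewrite !S_INR. simpl pred. simpl INR. ring.
Qed.

Lemma T_zero n t : T n 0 t = (t ^ 2 - 1) ^ n.
Proof. induction n; simpl; [reflexivity|]. rewrite IHn. simpl. ring. Qed.

Lemma Derive_n_T n j t : Derive_n (fun t => (t ^ 2 - 1) ^ n) j t = T n j t.
Proof.
  revert t; induction j; intros t.
  - simpl. now rewrite T_zero.
  - simpl. rewrite (Derive_ext _ (T n j)) by exact IHj.
    apply is_derive_unique, T_tower.
Qed.

Lemma T_vanish n : forall j t, (2 * n < j)%nat -> T n j t = 0.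
Proof.
  induction n; intros j t H; simpl.
  - destruct j; [lia|reflexivity].
  - rewrite !IHn by lia. ring.
Qed.

Lemma tower_eq (A B : nat -> R -> R) :
  (forall j (t : R), is_derive (A j) t (A (S j) t)) ->
  (forall j (t : R), is_derive (B j) t (B (S j) t)) ->
  (forall t, A 0%nat t = B 0%nat t) -> forall j t, A j t = B j t.
Proof.
  intros HA HB H0 j. induction j; intros t; auto.
  assert (E : A j = B j) by (apply functional_extensionality; auto).
  pose proof (HA j t) as h1. rewrite E in h1.
  pose proof (HB j t) as h2.
  apply is_derive_unique in h1. apply is_derive_unique in h2. congruence.
Qed.

Lemma T_one n t : (t ^ 2 - 1) * T n 1 t = 2 * INR n * t * T n 0 t.
Proof.
  induction n; cbn [T].
  - simpl. ring.
  - simpl (1 - 1)%nat. simpl (1-2)%nat.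
    transitivity ((t^2-1) * ((t ^ 2 - 1) * T n 1 t) + (t^2-1) * 2 * t * T n 0 t).
    { simpl INR. ring. }
    rewrite IHn. rewrite S_INR. simpl INR. ring.
Qed.

Lemma T_special N t : (t ^ 2 - 1) * T N (S N) t = INR N * INR (S N) * T N (N - 1) t.
Proof.
  set (A := fun j t => (t ^ 2 - 1) * T N (S j) t + 2 * INR j * t * T N j t
                        + INR j * INR (j - 1) * T N (j - 1) t).
  set (B := fun j t => 2 * INR N * (t * T N j t + INR j * T N (j - 1) t)).
  assert (HAB : forall j t, A j t = B j t).
  { apply tower_eq.
    - intros j x. unfold A. eapply is_derive_eq.
      + apply Rd_plus; [apply Rd_plus|].
        * apply Rd_mult; [|apply T_tower].
          apply Rd_plus. apply (is_derive_pow (fun t => t) 2 x 1), Rd_id. apply Rd_const.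
        * apply Rd_mult; [|apply T_tower].
          apply (Rd_mult (fun _ => 2 * INR j) (fun t => t)); [apply Rd_const|apply Rd_id].
        * apply Rd_mult; [apply Rd_const|apply T_tower].
      + destruct j as [|j].
        * simpl. ring.
        * replace (S j - 1)%nat with j by lia. replace (S (S j) - 1)%nat with (S j) by lia.
          rewrite !S_INR. simpl pred. simpl INR. ring.
    - intros j x. unfold B. eapply is_derive_eq.
      + apply is_derive_scal. apply Rd_plus.
        * apply Rd_mult; [apply Rd_id|apply T_tower].
        * apply Rd_mult; [apply Rd_const|apply T_tower].
      + destruct j as [|j].
        * simpl. ring.
        * replace (S j - 1)%nat with j by lia. replace (S (S j) - 1)%nat with (S j) by lia.
          rewrite !S_INR. ring.
    - intros x. unfold A, B. simpl INR. rewrite T_one. ring. }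
  specialize (HAB N t). unfold A, B in HAB.
  destruct N as [|N].
  - simpl. ring.
  - replace (S N - 1)%nat with N in * by lia. rewrite !S_INR in *. lra.
Qed.

Open Scope R_scope.

Lemma legendre_T n a mu : legendreP n a mu =
  (-1) ^ a * (sqrt (1 - mu ^ 2)) ^ a / (2 ^ n * INR (fact n)) * T n (a + n) mu.
Proof. unfold legendreP. now rewrite Derive_n_T. Qed.

Lemma vnorm_sq w : vnorm w * vnorm w = vx w ^ 2 + vy w ^ 2 + vz w ^ 2.
Proof. unfold vnorm, vdot. rewrite sqrt_sqrt by nra. ring. Qed.

Lemma vnorm_pos w : 0 <= vnorm w.
Proof. apply sqrt_pos. Qed.

Lemma vnorm0 w : vnorm w = 0 -> vx w = 0 /\ vy w = 0 /\ vz w = 0.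
Proof. intros H. pose proof (vnorm_sq w) as E. rewrite H in E. repeat split; nra. Qed.

Section Geo.
Variable w : vec3.
Hypothesis Hr : vnorm w <> 0.
Let r := vnorm w.
Let mu := vz w / r.
Let s := sqrt (1 - mu ^ 2).

Lemma geo_mu : r * mu = vz w.
Proof. unfold mu. field. exact Hr. Qed.

Lemma geo_1mu : 0 <= 1 - mu ^ 2.
Proof.
  assert (0 < r) by (pose proof (vnorm_pos w); unfold r in *; lra).
  pose proof (vnorm_sq w) as E. fold r in E.
  assert (mu ^ 2 = vz w ^ 2 / (r * r)) by (unfold mu; field; lra).
  rewrite H0.
  replace (1 - vz w ^ 2 / (r * r)) with ((r * r - vz w ^ 2) / (r * r)) by (field; lra).
  rewrite E. unfold Rdiv. apply Rmult_le_pos; [nra| apply Rlt_le, Rinv_0_lt_compat; nra].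
Qed.

Lemma geo_s2 : s * s = 1 - mu ^ 2.
Proof. unfold s. apply sqrt_sqrt, geo_1mu. Qed.

Lemma geo_rs : r * s = sqrt (vx w ^ 2 + vy w ^ 2).
Proof.
  symmetry. apply sqrt_lem_1.
  - nra.
  - apply Rmult_le_pos. apply vnorm_pos. apply sqrt_pos.
  - pose proof geo_s2. pose proof (vnorm_sq w). fold r in H0.
    pose proof geo_mu.
    transitivity (r * r * (s * s)). ring. rewrite H.
    transitivity (r * r - (r * mu) ^ 2). ring. rewrite H1. lra.
Qed.
End Geo.

Open Scope C_scope.

Lemma eiphi_facts w :
  RtoC (sqrt (vx w ^ 2 + vy w ^ 2)) * eiphi w = (vx w, vy w) /\
  eiphi w * Cconj (eiphi w) = 1.
Proof.
  unfold eiphi. cbv zeta.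
  destruct (Req_EM_T (sqrt (vx w ^ 2 + vy w ^ 2)) 0) as [H|H].
  - rewrite H. assert (vx w ^ 2 + vy w ^ 2 = 0)%R.
    { rewrite <- (sqrt_sqrt (vx w ^ 2 + vy w ^ 2)) by nra. rewrite H. ring. }
    assert (vx w = 0 /\ vy w = 0)%R as [h1 h2] by (split; nra).
    rewrite h1, h2. split; apply injective_projections; simpl; ring.
  - assert (Hq : (sqrt (vx w ^ 2 + vy w ^ 2) * sqrt (vx w ^ 2 + vy w ^ 2) = vx w ^ 2 + vy w ^ 2)%R)
      by (apply sqrt_sqrt; nra).
    set (q := sqrt (vx w ^ 2 + vy w ^ 2)) in *.
    split; apply injective_projections; simpl.
    all: try (field; auto).
    transitivity ((vx w ^ 2 + vy w ^ 2) / (q * q))%R. field; auto.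
    rewrite <- Hq. field; auto.
Qed.

Open Scope R_scope.

Lemma T_S n j t : T (S n) j t = (t ^ 2 - 1) * T n j t + 2 * INR j * t * T n (j - 1) t
            + INR j * INR (j - 1) * T n (j - 2) t.
Proof. reflexivity. Qed.

Definition Xf (w : vec3) (n a : nat) : R :=
  / INR (fact (n + a)) * vnorm w ^ n * legendreP n a (vz w / vnorm w).

Lemma INR_fact_nz n : INR (fact n) <> 0.
Proof. apply not_0_INR, fact_neq_0. Qed.

Lemma real_nz w N a : vnorm w <> 0 ->
  let s := sqrt (1 - (vz w / vnorm w) ^ 2) in
  INR (S N) * Xf w (S N) (S a) =
  -((vnorm w * s / 2) * Xf w N a - (vnorm w * s / 2) * Xf w N (S (S a)) - vz w * Xf w N (S a)).
Proof.
  intros Hr s. unfold Xf. rewrite !legendre_T.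
  pose proof (geo_s2 w Hr) as Hs. pose proof (geo_mu w Hr) as Hm.
  fold s in Hs.
  set (r := vnorm w) in *. set (mu := vz w / r) in *. fold s.
  rewrite <- Hm. rewrite T_S.
  replace (S a + S N - 1)%nat with (S a + N)%nat by lia.
  replace (S a + S N - 2)%nat with (a + N)%nat by lia.
  replace (S a + S N)%nat with (S (S a) + N)%nat by lia.
  replace (mu ^ 2 - 1) with (-(s * s)) by lra.
  replace (S N + S a)%nat with (S (S (N + a))) by lia.
  replace (N + S (S a))%nat with (S (S (N + a))) by lia.
  replace (N + S a)%nat with (S (N + a)) by lia.
  cbn [fact]. rewrite !mult_INR. rewrite !S_INR.
  replace (INR (a + N)) with (INR (N + a)) by (f_equal; lia).
  rewrite !plus_INR.
  pose proof (INR_fact_nz (N + a)). pose proof (INR_fact_nz N).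
  pose proof (pos_INR N). pose proof (pos_INR a).
  cbn [pow]. rewrite ?S_INR. field. repeat split; try lra.
  all: try (apply pow_nonzero; lra).
  all: rewrite <- ?plus_INR; try lra.
Qed.

Lemma real_zero w N : vnorm w <> 0 ->
  let s := sqrt (1 - (vz w / vnorm w) ^ 2) in
  INR (S N) * Xf w (S N) 0 =
  2 * (vnorm w * s / 2) * Xf w N 1 + vz w * Xf w N 0.
Proof.
  intros Hr s. unfold Xf. rewrite !legendre_T.
  pose proof (geo_s2 w Hr) as Hs. pose proof (geo_mu w Hr) as Hm.
  fold s in Hs.
  set (r := vnorm w) in *. set (mu := vz w / r) in *. fold s.
  rewrite <- Hm. rewrite T_S.
  replace (0 + S N - 1)%nat with N by lia.
  replace (0 + S N - 2)%nat with (N - 1)%nat by lia.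
  replace (0 + S N)%nat with (S N) by lia.
  replace (1 + N)%nat with (S N) by lia.
  replace (0 + N)%nat with N by lia.
  replace (INR (S N) * INR N * T N (N - 1) mu) with ((mu ^ 2 - 1) * T N (S N) mu)
    by (rewrite T_special; ring).
  replace (mu ^ 2 - 1) with (-(s * s)) by lra.
  replace (S N + 0)%nat with (S N) by lia.
  replace (N + 1)%nat with (S N) by lia.
  replace (N + 0)%nat with N by lia.
  cbn [fact]. rewrite !mult_INR. rewrite !S_INR.
  pose proof (INR_fact_nz N). pose proof (pos_INR N).
  cbn [pow]. rewrite ?S_INR. field. repeat split; try lra.
  all: try (apply pow_nonzero; lra).
Qed.

Open Scope C_scope.

Lemma lc1 (x y k1 l1 r1 : C) : l1 = r1 -> x - y = k1 * (l1 - r1) -> x = y.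
Proof. intros -> H. assert (E : x = (x - y) + y) by ring. rewrite E, H. ring. Qed.
Lemma lc2 (x y k1 l1 r1 k2 l2 r2 : C) : l1 = r1 -> l2 = r2 ->
  x - y = k1 * (l1 - r1) + k2 * (l2 - r2) -> x = y.
Proof. intros -> -> H. assert (E : x = (x - y) + y) by ring. rewrite E, H. ring. Qed.
Lemma lc3 (x y k1 l1 r1 k2 l2 r2 k3 l3 r3 : C) : l1 = r1 -> l2 = r2 -> l3 = r3 ->
  x - y = k1 * (l1 - r1) + k2 * (l2 - r2) + k3 * (l3 - r3) -> x = y.
Proof. intros -> -> -> H. assert (E : x = (x - y) + y) by ring. rewrite E, H. ring. Qed.

Lemma Ci2 : Ci * Ci = -1.
Proof. apply injective_projections; simpl; ring. Qed.

Lemma RtoC_m1 N : RtoC ((-1) ^ S N) = - RtoC ((-1) ^ N).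
Proof. apply injective_projections; simpl; ring. Qed.

Lemma alg_main (N a : nat) (rs2 z X0 X1 X2 Xs : R) (e e' : C) :
  e' * e = 1 ->
  (INR (S N) * Xs = -(rs2 * X0 - rs2 * X2 - z * X1))%R ->
  RtoC (INR (S N)) * (RtoC ((-1) ^ (S N)) * Cpow Ci (S a) * RtoC Xs * Cpow e (S a)) =
  Ci * (RtoC rs2 * e) * (RtoC ((-1) ^ N) * Cpow Ci a * RtoC X0 * Cpow e a)
  + Ci * (RtoC rs2 * e') * (RtoC ((-1) ^ N) * Cpow Ci (S (S a)) * RtoC X2 * Cpow e (S (S a)))
  - RtoC z * (RtoC ((-1) ^ N) * Cpow Ci (S a) * RtoC X1 * Cpow e (S a)).
Proof.
  intros He Hr.
  assert (H1 : RtoC (INR (S N)) * RtoC Xs = -(RtoC rs2 * RtoC X0 - RtoC rs2 * RtoC X2 - RtoC z * RtoC X1)).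
  { rewrite <- !RtoC_mult, <- !RtoC_minus, <- RtoC_opp, Hr. reflexivity. }
  assert (Hi : Cpow Ci (S (S a)) = - Cpow Ci a).
  { cbn [Cpow]. transitivity ((Ci * Ci) * Cpow Ci a). ring. rewrite Ci2. ring. }
  rewrite RtoC_m1, Hi. cbn [Cpow].
  set (Z := RtoC ((-1) ^ N)). set (P := Cpow Ci a). set (E' := Cpow e a).
  apply (lc2 _ _ (- Z * Ci * P * e * E') _ _ (Ci * RtoC rs2 * Z * P * RtoC X2 * e * E') _ _ H1 He).
  ring.
Qed.

Lemma alg_zero (N : nat) (rs2 z X0 X1 Xs : R) (E cE : C) :
  E * cE = 1 ->
  (INR (S N) * Xs = 2 * rs2 * X1 + z * X0)%R ->
  RtoC (INR (S N)) * (RtoC ((-1) ^ (S N)) * Cpow Ci 0 * RtoC Xs * Cpow E 0) =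
  Ci * (RtoC rs2 * E) * (RtoC ((-1) ^ N) * Cpow Ci 1 * RtoC X1 * Cpow cE 1)
  + Ci * (RtoC rs2 * cE) * (RtoC ((-1) ^ N) * Cpow Ci 1 * RtoC X1 * Cpow E 1)
  - RtoC z * (RtoC ((-1) ^ N) * Cpow Ci 0 * RtoC X0 * Cpow E 0).
Proof.
  intros He Hr.
  assert (H1 : RtoC (INR (S N)) * RtoC Xs = RtoC 2 * RtoC rs2 * RtoC X1 + RtoC z * RtoC X0).
  { rewrite <- !RtoC_mult, <- !RtoC_plus, Hr. reflexivity. }
  rewrite RtoC_m1. cbn [Cpow].
  set (Z := RtoC ((-1) ^ N)).
  apply (lc3 _ _ (- Z) _ _ (- RtoC 2 * Z * RtoC rs2 * RtoC X1 * Ci * Ci) _ _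
                (- RtoC 2 * Z * RtoC rs2 * RtoC X1) _ _ H1 He Ci2).
  ring.
Qed.

Definition Kop (v : vec3) (F : Z -> C) (m : Z) : C :=
  Ci * xi v * F (m - 1)%Z + Ci * eta v * F (m + 1)%Z - RtoC (vz v) * F m.

Definition Sf (n : nat) (m : Z) (w : vec3) : C :=
  RtoC ((-1) ^ n) * Cpow Ci (Z.abs_nat m) * RtoC (Xf w n (Z.abs_nat m)) * eimphi m w.

Lemma eimphi_pos m w : (0 <= m)%Z -> eimphi m w = Cpow (eiphi w) (Z.abs_nat m).
Proof. intros H. unfold eimphi. destruct (Z.leb_spec 0 m); [reflexivity|lia]. Qed.
Lemma eimphi_neg m w : (m < 0)%Z -> eimphi m w = Cpow (Cconj (eiphi w)) (Z.abs_nat m).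
Proof. intros H. unfold eimphi. destruct (Z.leb_spec 0 m); [lia|reflexivity]. Qed.

Lemma xi_eta_facts w : vnorm w <> 0%R ->
  let s := sqrt (1 - (vz w / vnorm w) ^ 2) in
  xi w = RtoC (vnorm w * s / 2) * eiphi w /\
  eta w = RtoC (vnorm w * s / 2) * Cconj (eiphi w).
Proof.
  intros Hr s. pose proof (geo_rs w Hr) as Hrs. fold s in Hrs.
  destruct (eiphi_facts w) as [H1 _].
  rewrite <- Hrs in H1. destruct (eiphi w) as [e1 e2].
  unfold RtoC, Cmult in H1. simpl in H1. injection H1 as H1 H2.
  unfold xi, eta. split; apply injective_projections; simpl; lra.
Qed.

Lemma Sf_r0 N m w : vnorm w = 0%R -> Sf (S N) m w = 0.
Proof.
  intros H. unfold Sf, Xf. rewrite H. rewrite pow_i by lia.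
  rewrite Rmult_0_r, Rmult_0_l. apply injective_projections; simpl; ring.
Qed.

Lemma Sf_rec N m w : RtoC (INR (S N)) * Sf (S N) m w = Kop w (fun m' => Sf N m' w) m.
Proof.
  destruct (Req_dec (vnorm w) 0) as [H0|Hr].
  - rewrite Sf_r0 by exact H0. destruct (vnorm0 w H0) as (hx & hy & hz).
    unfold Kop, xi, eta. rewrite hx, hy, hz.
    apply injective_projections; simpl; field.
  - destruct (xi_eta_facts w Hr) as [Hxi Heta].
    destruct (eiphi_facts w) as [_ HE].
    pose proof (real_nz w N) as RN. pose proof (real_zero w N Hr) as RZ.
    cbv zeta in RN, RZ, Hxi, Heta.
    set (s := sqrt (1 - (vz w / vnorm w) ^ 2)) in *.
    set (E := eiphi w) in *.
    unfold Kop. rewrite Hxi, Heta.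
    destruct (Z.lt_trichotomy m 0) as [Hm|[Hm|Hm]].
    + set (a := (Z.abs_nat m - 1)%nat).
      assert (A0 : Z.abs_nat m = S a) by (unfold a; lia).
      assert (A1 : Z.abs_nat (m - 1) = S (S a)) by (unfold a; lia).
      assert (A2 : Z.abs_nat (m + 1) = a) by (unfold a; lia).
      assert (E2 : eimphi (m + 1) w = Cpow (Cconj E) a).
      { destruct (Z.eq_dec (m + 1) 0) as [e|e].
        - rewrite e. unfold a. replace (Z.abs_nat m) with 1%nat by lia. reflexivity.
        - rewrite eimphi_neg by lia. now rewrite A2. }
      unfold Sf. rewrite (eimphi_neg m), (eimphi_neg (m - 1)) by lia. rewrite E2.
      fold E. rewrite A0, A1, A2.
      etransitivity.
      { apply (alg_main N a (vnorm w * s / 2) (vz w) (Xf w N a) (Xf w N (S a))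
                 (Xf w N (S (S a))) (Xf w (S N) (S a)) (Cconj E) E HE (RN a Hr)). }
      ring.
    + subst m. unfold Sf.
      rewrite (eimphi_neg (0 - 1)), (eimphi_pos (0 + 1)), (eimphi_pos 0) by lia.
      fold E. cbn [Z.abs_nat Z.sub Z.add Z.opp Z.pos_sub Pos.to_nat].
      apply (alg_zero N (vnorm w * s / 2) (vz w) (Xf w N 0) (Xf w N 1) (Xf w (S N) 0) E (Cconj E) HE RZ).
    + set (a := (Z.abs_nat m - 1)%nat).
      assert (A0 : Z.abs_nat m = S a) by (unfold a; lia).
      assert (A1 : Z.abs_nat (m - 1) = a) by (unfold a; lia).
      assert (A2 : Z.abs_nat (m + 1) = S (S a)) by (unfold a; lia).
      assert (HE' : Cconj E * E = 1) by (rewrite <- HE; ring).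
      unfold Sf. rewrite (eimphi_pos m), (eimphi_pos (m - 1)), (eimphi_pos (m + 1)) by lia.
      fold E. rewrite A0, A1, A2.
      apply (alg_main N a (vnorm w * s / 2) (vz w) (Xf w N a) (Xf w N (S a))
                 (Xf w N (S (S a))) (Xf w (S N) (S a)) E (Cconj E) HE' (RN a Hr)).
Qed.

Open Scope C_scope.

Fixpoint Rp (n : nat) (m : Z) (w : vec3) : C :=
  match n with
  | O => if Z.eqb m 0 then 1 else 0
  | S k => / RtoC (INR (S k)) * Kop w (fun m' => Rp k m' w) m
  end.

Lemma Kop_ext v F G m : (forall m', F m' = G m') -> Kop v F m = Kop v G m.
Proof. intros H. unfold Kop. rewrite !H. reflexivity. Qed.

Lemma RtoC_INR_S_nz k : RtoC (INR (S k)) <> 0.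
Proof. intros H. injection H as H. apply (not_0_INR (S k)); auto. Qed.

Lemma Xf_vanish w n a : (n < a)%nat -> Xf w n a = 0%R.
Proof.
  intros H. unfold Xf. rewrite legendre_T. rewrite T_vanish by lia. ring.
Qed.

Lemma Sf_vanish n m w : (n < Z.abs_nat m)%nat -> Sf n m w = 0.
Proof.
  intros H. unfold Sf. rewrite Xf_vanish by exact H.
  apply injective_projections; simpl; ring.
Qed.

Lemma Sf0 m w : Sf 0 m w = if Z.eqb m 0 then 1 else 0.
Proof.
  destruct (Z.eqb_spec m 0) as [->|Hm].
  - unfold Sf, Xf. simpl Z.abs_nat. rewrite legendre_T. rewrite (eimphi_pos 0) by lia.
    simpl. apply injective_projections; simpl; field.
  - apply Sf_vanish. lia.
Qed.

Lemma Sf_Rp n : forall m w, Sf n m w = Rp n m w.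
Proof.
  induction n as [|n IH]; intros m w.
  - rewrite Sf0. reflexivity.
  - cbn [Rp]. rewrite <- (Kop_ext w (fun m' => Sf n m' w)) by (intros; apply IH).
    rewrite <- Sf_rec. field. apply RtoC_INR_S_nz.
Qed.

Definition Rz (n m : Z) (w : vec3) : C :=
  if Z.ltb n 0 then 0 else Rp (Z.to_nat n) m w.

Lemma solidR_Rz n m w : solidR n m w = Rz n m w.
Proof.
  unfold solidR, Rz. destruct (Z.ltb_spec n 0) as [Hn|Hn].
  - reflexivity.
  - simpl orb. rewrite <- Sf_Rp.
    destruct (Z.ltb_spec n (Z.abs m)) as [Hm|Hm].
    + symmetry. apply Sf_vanish. lia.
    + unfold Sf, Xf. reflexivity.
Qed.

Lemma Rz_neg n m w : (n < 0)%Z -> Rz n m w = 0.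
Proof. intros H. unfold Rz. destruct (Z.ltb_spec n 0); [reflexivity|lia]. Qed.

Lemma Rz_nat k m w : Rz (Z.of_nat k) m w = Rp k m w.
Proof. unfold Rz. destruct (Z.ltb_spec (Z.of_nat k) 0); [lia|]. now rewrite Nat2Z.id. Qed.

Lemma Rz_euler n m w : (0 <= n)%Z ->
  RtoC (IZR n) * Rz n m w = Kop w (fun m' => Rz (n - 1) m' w) m.
Proof.
  intros Hn. destruct (Z.eq_dec n 0) as [->|Hn0].
  - unfold Kop. rewrite !(Rz_neg (0 - 1)) by lia. apply injective_projections; simpl; ring.
  - destruct (Z_of_nat_complete n Hn) as [k ->]. destruct k as [|k]; [lia|].
    rewrite Rz_nat. rewrite <- INR_IZR_INZ.
    rewrite (Kop_ext w _ (fun m' => Rp k m' w)).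
    2:{ intros m'. replace (Z.of_nat (S k) - 1)%Z with (Z.of_nat k) by lia. apply Rz_nat. }
    cbn [Rp]. field. apply RtoC_INR_S_nz.
Qed.

Open Scope C_scope.

Lemma is_derive_ext_R (f g : R -> R) (x l : R) : (forall t : R, f t = g t) -> is_derive f x l -> is_derive g x l.
Proof. intros. eapply is_derive_ext; eauto. Qed.


Definition Cder (f : R -> C) (x : R) (l : C) : Prop :=
  is_derive (fun t => fst (f t)) x (fst l) /\ is_derive (fun t => snd (f t)) x (snd l).

Lemma Cder_eq f x l l' : Cder f x l -> l = l' -> Cder f x l'.
Proof. intros H <-; exact H. Qed.

Lemma Cder_ext f g x l : (forall t, f t = g t) -> Cder f x l -> Cder g x l.
Proof.
  intros E [H1 H2]. split.
  - apply (is_derive_ext_R (fun t => fst (f t))); [intros; now rewrite E|exact H1].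
  - apply (is_derive_ext_R (fun t => snd (f t))); [intros; now rewrite E|exact H2].
Qed.

Lemma Cder_const (c : C) x : Cder (fun _ => c) x 0.
Proof. split; apply Rd_const. Qed.

Lemma Cder_RtoC (g : R -> R) x l : is_derive g x l -> Cder (fun t => RtoC (g t)) x (RtoC l).
Proof. intros H. split; simpl. exact H. apply Rd_const. Qed.

Lemma Cder_plus f g x a b : Cder f x a -> Cder g x b -> Cder (fun t => f t + g t) x (a + b).
Proof.
  intros [H1 H2] [H3 H4]. split; simpl.
  - apply (Rd_plus (fun t => fst (f t)) (fun t => fst (g t))); auto.
  - apply (Rd_plus (fun t => snd (f t)) (fun t => snd (g t))); auto.
Qed.

Lemma Rd_minus (f g : R -> R) (x a b : R) : is_derive f x a -> is_derive g x b ->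
  is_derive (fun t => f t - g t)%R x (a - b)%R.
Proof.
  intros. apply (is_derive_ext_R (fun t => f t + (-1) * g t)%R). intros; ring.
  eapply is_derive_eq. apply Rd_plus. eauto. apply is_derive_scal. eauto. ring.
Qed.

Lemma Cder_minus f g x a b : Cder f x a -> Cder g x b -> Cder (fun t => f t - g t) x (a - b).
Proof.
  intros [H1 H2] [H3 H4]. split; simpl.
  - apply (Rd_plus (fun t => fst (f t)) (fun t => - fst (g t))%R); auto.
    apply (is_derive_ext_R (fun t => 0 - fst (g t))%R). intros; ring.
    apply (is_derive_eq _ _ (0 - fst b)%R). apply Rd_minus; auto. apply Rd_const. ring.
  - apply (Rd_plus (fun t => snd (f t)) (fun t => - snd (g t))%R); auto.
    apply (is_derive_ext_R (fun t => 0 - snd (g t))%R). intros; ring.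
    apply (is_derive_eq _ _ (0 - snd b)%R). apply Rd_minus; auto. apply Rd_const. ring.
Qed.

Lemma Cder_mult f g x a b : Cder f x a -> Cder g x b ->
  Cder (fun t => f t * g t) x (a * g x + f x * b).
Proof.
  intros [H1 H2] [H3 H4]. split; simpl.
  - eapply is_derive_eq.
    apply (Rd_minus (fun t => fst (f t) * fst (g t))%R (fun t => snd (f t) * snd (g t))%R);
      apply Rd_mult; eauto.
    simpl; ring.
  - eapply is_derive_eq.
    apply (Rd_plus (fun t => fst (f t) * snd (g t))%R (fun t => snd (f t) * fst (g t))%R);
      apply Rd_mult; eauto.
    simpl; ring.
Qed.

Lemma Cder_cmul (c : C) f x a : Cder f x a -> Cder (fun t => c * f t) x (c * a).
Proof.
  intros H. eapply Cder_eq. apply (Cder_mult (fun _ => c) f x 0 a (Cder_const c x) H). ring.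
Qed.

Section Curve.
Variable W : R -> vec3.
Variable d : vec3.
Hypothesis HW : forall t, is_derive (fun s => vx (W s)) t (vx d) /\
  is_derive (fun s => vy (W s)) t (vy d) /\ is_derive (fun s => vz (W s)) t (vz d).

Lemma Cder_xi u : Cder (fun t => xi (W t)) u (xi d).
Proof.
  destruct (HW u) as (h1 & h2 & h3). unfold xi. split; simpl.
  - apply (is_derive_ext_R (fun t => vx (W t) * / 2)%R). intros; reflexivity.
    apply (is_derive_eq _ _ (vx d * /2)%R).
    eapply is_derive_eq. apply (Rd_mult _ (fun _ => / 2)%R). exact h1. apply Rd_const. ring. reflexivity.
  - apply (is_derive_ext_R (fun t => vy (W t) * / 2)%R). intros; reflexivity.
    eapply is_derive_eq. apply (Rd_mult _ (fun _ => / 2)%R). exact h2. apply Rd_const. unfold Rdiv. ring.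
Qed.

Lemma Cder_eta u : Cder (fun t => eta (W t)) u (eta d).
Proof.
  destruct (HW u) as (h1 & h2 & h3). unfold eta. split; simpl.
  - apply (is_derive_ext_R (fun t => vx (W t) * / 2)%R). intros; reflexivity.
    eapply is_derive_eq. apply (Rd_mult _ (fun _ => / 2)%R). exact h1. apply Rd_const. unfold Rdiv. ring.
  - apply (is_derive_ext_R (fun t => vy (W t) * (- / 2))%R). intros; unfold Rdiv; ring.
    eapply is_derive_eq. apply (Rd_mult _ (fun _ => - / 2)%R). exact h2. apply Rd_const. unfold Rdiv. ring.
Qed.

Lemma Cder_vz u : Cder (fun t => RtoC (vz (W t))) u (RtoC (vz d)).
Proof. apply Cder_RtoC. apply HW. Qed.

Lemma Kop_comm a b F m : Kop a (fun m' => Kop b F m') m = Kop b (fun m' => Kop a F m') m.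
Proof.
  unfold Kop. replace (m - 1 + 1)%Z with m by ring. replace (m + 1 - 1)%Z with m by ring.
  ring.
Qed.

Lemma Kop_scal v (c : C) F m : Kop v (fun m' => c * F m') m = c * Kop v F m.
Proof. unfold Kop. ring. Qed.

Lemma Rp_der n : forall m u, Cder (fun t => Rp n m (W t)) u
  (match n with O => 0 | S k => Kop d (fun m' => Rp k m' (W u)) m end).
Proof.
  induction n as [|k IH]; intros m u.
  - cbn [Rp]. apply Cder_const.
  - cbn [Rp]. eapply Cder_eq.
    { apply Cder_cmul. unfold Kop.
      apply Cder_minus; [apply Cder_plus|].
      - apply Cder_mult; [apply Cder_cmul, Cder_xi | apply IH].
      - apply Cder_mult; [apply Cder_cmul, Cder_eta | apply IH].
      - apply Cder_mult; [apply Cder_vz | apply IH]. }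
    destruct k as [|k].
    + unfold Kop. cbn [Rp]. replace (INR 1) with 1%R by reflexivity.
      field.
    + set (G := fun m' => Rp (S k) m' (W u)).
      transitivity (/ RtoC (INR (S (S k))) * (Kop d G m + Kop (W u) (fun m' => Kop d (fun m'' => Rp k m'' (W u)) m') m)).
      { unfold Kop, G. ring. }
      rewrite Kop_comm.
      rewrite (Kop_ext d (fun m' => Kop (W u) (fun m'' => Rp k m'' (W u)) m') (fun m' => RtoC (INR (S k)) * G m')).
      2:{ intros m'. cbv beta. unfold G. cbn [Rp]. pose proof (RtoC_INR_S_nz k).
          set (q := RtoC (INR (S k))) in *. field. exact H. }
      rewrite Kop_scal. pose proof (RtoC_INR_S_nz (S k)) as Hq.
      rewrite (S_INR (S k)), RtoC_plus in *.
      pose proof (RtoC_INR_S_nz k).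
      set (q := RtoC (INR (S k))) in *. field. exact Hq.
Qed.
End Curve.

Open Scope C_scope.

Definition Cdiff (f : R -> C) : Prop := forall u, exists l, Cder f u l.

Lemma Cdiff_plus f g : Cdiff f -> Cdiff g -> Cdiff (fun t => f t + g t).
Proof. intros H1 H2 u. destruct (H1 u) as [a Ha], (H2 u) as [b Hb]. eexists. apply Cder_plus; eauto. Qed.
Lemma Cdiff_minus f g : Cdiff f -> Cdiff g -> Cdiff (fun t => f t - g t).
Proof. intros H1 H2 u. destruct (H1 u) as [a Ha], (H2 u) as [b Hb]. eexists. apply Cder_minus; eauto. Qed.
Lemma Cdiff_mult f g : Cdiff f -> Cdiff g -> Cdiff (fun t => f t * g t).
Proof. intros H1 H2 u. destruct (H1 u) as [a Ha], (H2 u) as [b Hb]. eexists. apply Cder_mult; eauto. Qed.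
Lemma Cdiff_cmul c f : Cdiff f -> Cdiff (fun t => c * f t).
Proof. intros H1 u. destruct (H1 u) as [a Ha]. eexists. apply Cder_cmul; eauto. Qed.
Lemma Cdiff_const c : Cdiff (fun _ => c).
Proof. intros u. eexists. apply Cder_const. Qed.
Lemma Cdiff_RtoC (g : R -> R) : (forall u, ex_derive g u) -> Cdiff (fun t => RtoC (g t)).
Proof. intros H u. destruct (H u) as [l Hl]. eexists. apply Cder_RtoC; eauto. Qed.
Lemma Cdiff_ext f g : (forall t, f t = g t) -> Cdiff f -> Cdiff g.
Proof. intros E H u. destruct (H u) as [l Hl]. exists l. eapply Cder_ext; eauto. Qed.

Lemma Cdiff_cont f : Cdiff f -> forall u,
  continuous (fun t => fst (f t)) u /\ continuous (fun t => snd (f t)) u.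
Proof.
  intros H u. destruct (H u) as [l [H1 H2]]. split.
  - apply (ex_derive_continuous (K:=R_AbsRing) (V:=R_NormedModule)). eexists; eauto.
  - apply (ex_derive_continuous (K:=R_AbsRing) (V:=R_NormedModule)). eexists; eauto.
Qed.

Lemma ex_RInt_C f : Cdiff f -> ex_RInt (V:=C_R_CompleteNormedModule) f 0 1.
Proof.
  intros H.
  apply (ex_RInt_fct_extend_pair (U:=R_NormedModule) (V:=R_NormedModule)).
  - apply (ex_RInt_continuous (V:=R_CompleteNormedModule)). intros z _. apply (Cdiff_cont f H).
  - apply (ex_RInt_continuous (V:=R_CompleteNormedModule)). intros z _. apply (Cdiff_cont f H).
Qed.

Lemma FTC_C (F f : R -> C) : (forall u, Cder F u (f u)) -> Cdiff f ->
  is_RInt (V:=C_R_CompleteNormedModule) f 0 1 (F 1%R - F 0%R).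
Proof.
  intros HF Hf.
  replace (F 1%R - F 0%R) with ((minus (fst (F 1%R)) (fst (F 0%R)), minus (snd (F 1%R)) (snd (F 0%R))) : C).
  2:{ apply injective_projections; simpl; unfold minus, plus, opp; simpl; ring. }
  apply (is_RInt_fct_extend_pair (U:=R_NormedModule) (V:=R_NormedModule)).
  - apply (is_RInt_derive (V:=R_CompleteNormedModule) (fun t => fst (F t))).
    + intros x _. apply HF.
    + intros x _. apply (Cdiff_cont f Hf).
  - apply (is_RInt_derive (V:=R_CompleteNormedModule) (fun t => snd (F t))).
    + intros x _. apply HF.
    + intros x _. apply (Cdiff_cont f Hf).
Qed.

Lemma is_RInt_Cplus f g If Ig :
  is_RInt (V:=C_R_CompleteNormedModule) f 0 1 If ->
  is_RInt (V:=C_R_CompleteNormedModule) g 0 1 Ig ->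
  is_RInt (V:=C_R_CompleteNormedModule) (fun x => f x + g x) 0 1 (If + Ig).
Proof.
  intros H1 H2. apply (is_RInt_plus (V:=C_R_CompleteNormedModule) f g 0 1 If Ig H1 H2).
Qed.

Lemma is_RInt_Cscal (k : C) f If :
  is_RInt (V:=C_R_CompleteNormedModule) f 0 1 If ->
  is_RInt (V:=C_R_CompleteNormedModule) (fun x => k * f x) 0 1 (k * If).
Proof.
  intros H.
  pose proof (is_RInt_fct_extend_fst (U:=R_NormedModule) (V:=R_NormedModule) f 0 1 If H) as H1.
  pose proof (is_RInt_fct_extend_snd (U:=R_NormedModule) (V:=R_NormedModule) f 0 1 If H) as H2.
  replace (k * If) with ((minus (scal (fst k) (fst If)) (scal (snd k) (snd If)),
                          plus (scal (fst k) (snd If)) (scal (snd k) (fst If))) : C).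
  2:{ apply injective_projections; simpl; unfold minus, plus, opp, scal; simpl;
      unfold mult; simpl; ring. }
  apply (is_RInt_fct_extend_pair (U:=R_NormedModule) (V:=R_NormedModule)).
  - eapply is_RInt_ext.
    2:{ exact (is_RInt_minus (V:=R_NormedModule) _ _ 0 1 _ _
                (is_RInt_scal (V:=R_NormedModule) _ 0 1 (fst k) _ H1)
                (is_RInt_scal (V:=R_NormedModule) _ 0 1 (snd k) _ H2)). }
    intros x _. simpl. unfold minus, plus, opp, scal; simpl; unfold mult; simpl; ring.
  - eapply is_RInt_ext.
    2:{ exact (is_RInt_plus (V:=R_NormedModule) _ _ 0 1 _ _
                (is_RInt_scal (V:=R_NormedModule) _ 0 1 (fst k) _ H2)
                (is_RInt_scal (V:=R_NormedModule) _ 0 1 (snd k) _ H1)). }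
    intros x _. simpl. unfold minus, plus, opp, scal; simpl; unfold mult; simpl; ring.
Qed.

Lemma is_RInt_C_uniq f l1 l2 :
  is_RInt (V:=C_R_CompleteNormedModule) f 0 1 l1 ->
  is_RInt (V:=C_R_CompleteNormedModule) f 0 1 l2 -> l1 = l2.
Proof.
  intros H1 H2. apply is_RInt_unique in H1. apply is_RInt_unique in H2. congruence.
Qed.

Open Scope C_scope.

Section Curve2.
Variable W : R -> vec3.
Variable d : vec3.
Hypothesis HW : forall t, is_derive (fun s => vx (W s)) t (vx d) /\
  is_derive (fun s => vy (W s)) t (vy d) /\ is_derive (fun s => vz (W s)) t (vz d).

Lemma Rz_der n m u : (0 <= n)%Z ->
  Cder (fun t => Rz n m (W t)) u (Kop d (fun m' => Rz (n - 1) m' (W u)) m).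
Proof.
  intros Hn. destruct (Z_of_nat_complete n Hn) as [k ->].
  eapply Cder_ext. { intros t. symmetry. apply Rz_nat. }
  eapply Cder_eq. apply (Rp_der W d HW k).
  destruct k as [|k].
  - unfold Kop. rewrite !(Rz_neg (Z.of_nat 0 - 1)) by lia. ring.
  - apply Kop_ext. intros m'. replace (Z.of_nat (S k) - 1)%Z with (Z.of_nat k) by lia.
    symmetry. apply Rz_nat.
Qed.

Lemma Rz_Cdiff n m : Cdiff (fun t => Rz n m (W t)).
Proof.
  intros u. destruct (Z_lt_le_dec n 0) as [H|H].
  - exists 0. eapply Cder_ext. { intros t. symmetry. apply (Rz_neg n m (W t) H). } apply Cder_const.
  - eexists. apply Rz_der. exact H.
Qed.

Lemma Kop_Cdiff n m : Cdiff (fun t => Kop d (fun m' => Rz n m' (W t)) m).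
Proof.
  unfold Kop. apply Cdiff_minus; [apply Cdiff_plus|]; apply Cdiff_cmul; apply Rz_Cdiff.
Qed.
End Curve2.

Lemma poly_ex_derive (b c : nat) : forall u, ex_derive (fun t => t ^ b * (1 - t) ^ c)%R u.
Proof. intros u. auto_derive. auto. Qed.

Lemma poly_is_derive (b c : nat) u :
  is_derive (fun t => t ^ S b * (1 - t) ^ c)%R u
    (INR (S b) * u ^ b * (1 - u) ^ c - INR c * u ^ S b * (1 - u) ^ (pred c))%R.
Proof.
  eapply is_derive_eq.
  apply (Rd_mult (fun t => t ^ S b)%R (fun t => (1 - t) ^ c)%R).
  apply (is_derive_pow (fun t => t) (S b) u 1), Rd_id.
  apply (is_derive_pow (fun t => 1 - t)%R c u (0 - 1)%R), Rd_minus; [apply Rd_const|apply Rd_id].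
  simpl pred. ring.
Qed.

Open Scope C_scope.

Theorem lemma2 (v1 ru rv : vec3) (Ainv : nat -> nat -> R)
  (Hind : lin_indep2 ru rv)
  (Hinv : is_inverse3 (Amat ru rv) Ainv)
  (n m : Z) (b c : nat)
  (Hn : (0 <= n)%Z) (Hm : (Z.abs m <= n)%Z) :
  let j := jint v1 ru rv in
  let bb := RtoC (INR b) in
  let cc := RtoC (INR c) in
  RtoC (IZR n + INR b + INR c + 1) * j n m b c =
    (xi v1 + xi rv) *
      (Ci * j (n - 1)%Z (m - 1)%Z b c
       + bb * alphaM Ainv 1%nat * j n m (b - 1)%nat c
       + cc * alphaM Ainv 2%nat * j n m b (c - 1)%nat)
  + (eta v1 + eta rv) *
      (Ci * j (n - 1)%Z (m + 1)%Z b c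
       + bb * alphaP Ainv 1%nat * j n m (b - 1)%nat c
       + cc * alphaP Ainv 2%nat * j n m b (c - 1)%nat)
  + RtoC (vz v1 + vz rv) *
      (- j (n - 1)%Z m b c
       + bb * RtoC (Ainv 1%nat 3%nat) * j n m (b - 1)%nat c
       + cc * RtoC (Ainv 2%nat 3%nat) * j n m b (c - 1)%nat)
  - bb * RtoC (beta Ainv v1 1%nat) * j n m (b - 1)%nat c
  - cc * RtoC (beta Ainv v1 2%nat) * j n m b (c - 1)%nat
  + qval v1 ru rv n m b c.
Proof.
  intros j bb cc.
  assert (Hr1 : (Ainv 1%nat 1%nat * vx rv + Ainv 1%nat 2%nat * vy rv + Ainv 1%nat 3%nat * vz rv = 0)%R).
  { destruct (Hinv 1%nat 2%nat) as [H _]; try lia. exact H. }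
  assert (Hr2 : (Ainv 2%nat 1%nat * vx rv + Ainv 2%nat 2%nat * vy rv + Ainv 2%nat 3%nat * vz rv = 1)%R).
  { destruct (Hinv 2%nat 2%nat) as [H _]; try lia. exact H. }
  assert (Co1 : (xi v1 + xi rv) * alphaM Ainv 1%nat + (eta v1 + eta rv) * alphaP Ainv 1%nat
     + RtoC (vz v1 + vz rv) * RtoC (Ainv 1%nat 3%nat) - RtoC (beta Ainv v1 1%nat) = 0).
  { unfold xi, eta, alphaM, alphaP, beta. apply injective_projections; simpl; lra. }
  assert (Co2 : (xi v1 + xi rv) * alphaM Ainv 2%nat + (eta v1 + eta rv) * alphaP Ainv 2%nat
     + RtoC (vz v1 + vz rv) * RtoC (Ainv 2%nat 3%nat) - RtoC (beta Ainv v1 2%nat) = 1).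
  { unfold xi, eta, alphaM, alphaP, beta. apply injective_projections; simpl; lra. }

  set (W := fun u => rq v1 ru rv u (1 - u)%R).
  set (d := V3 (vx ru - vx rv) (vy ru - vy rv) (vz ru - vz rv)).
  assert (HW : forall t, is_derive (fun s => vx (W s)) t (vx d) /\
    is_derive (fun s => vy (W s)) t (vy d) /\ is_derive (fun s => vz (W s)) t (vz d)).
  { intros t. unfold W, rq, vadd, vscal, d; simpl. split; [|split]; auto_derive; auto; ring. }
  set (Q := fun n' m' b' c' u => Rz n' m' (W u) * RtoC (u ^ b' * (1 - u) ^ c')%R).
  assert (HQ : forall n' m' b' c', is_RInt (V:=C_R_CompleteNormedModule) (Q n' m' b' c') 0 1 (j n' m' b' c')).
  { intros n' m' b' c'.
    replace (j n' m' b' c') with (RInt (V:=C_R_CompleteNormedModule) (Q n' m' b' c') 0 1).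
    - apply (RInt_correct (V:=C_R_CompleteNormedModule)). apply ex_RInt_C.
      apply Cdiff_mult. apply (Rz_Cdiff W d HW). apply Cdiff_RtoC, poly_ex_derive.
    - unfold j, jint. apply RInt_ext. intros x _. unfold Q, Qf, W. rewrite solidR_Rz. reflexivity. }
  set (cxi := xi v1 + xi rv). set (ceta := eta v1 + eta rv). set (cz := RtoC (vz v1 + vz rv)).
  set (F := fun u => RtoC (u ^ S b * (1 - u) ^ c)%R * Rz n m (W u)).
  set (dp := fun u => (INR (S b) * u ^ b * (1 - u) ^ c - INR c * u ^ S b * (1 - u) ^ (pred c))%R).
  set (f' := fun u => RtoC (dp u) * Rz n m (W u)
                 + RtoC (u ^ S b * (1 - u) ^ c)%R * Kop d (fun m' => Rz (n - 1) m' (W u)) m).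
  assert (HF : forall u, Cder F u (f' u)).
  { intros u. unfold F, f', dp. apply (Cder_mult (fun t => RtoC (t ^ S b * (1 - t) ^ c)%R) (fun t => Rz n m (W t))). apply Cder_RtoC, poly_is_derive. apply Rz_der; auto. }
  assert (Hf : Cdiff f').
  { unfold f'. apply Cdiff_plus; apply Cdiff_mult.
    - apply Cdiff_RtoC. intros u. unfold dp. auto_derive. auto.
    - apply (Rz_Cdiff W d HW).
    - apply Cdiff_RtoC. intros u. auto_derive. auto.
    - apply (Kop_Cdiff W d HW). }
  pose proof (FTC_C F f' HF Hf) as Hftc.
  set (tgt := fun u => RtoC (IZR n + INR b + INR c + 1) * Q n m b c u
      + (- cc) * Q n m b (c - 1)%nat u
      + (- (Ci * cxi)) * Q (n - 1)%Z (m - 1)%Z b c u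
      + (- (Ci * ceta)) * Q (n - 1)%Z (m + 1)%Z b c u
      + cz * Q (n - 1)%Z m b c u).
  assert (Htgt : is_RInt (V:=C_R_CompleteNormedModule) tgt 0 1
      (RtoC (IZR n + INR b + INR c + 1) * j n m b c
      + (- cc) * j n m b (c - 1)%nat
      + (- (Ci * cxi)) * j (n - 1)%Z (m - 1)%Z b c
      + (- (Ci * ceta)) * j (n - 1)%Z (m + 1)%Z b c
      + cz * j (n - 1)%Z m b c)).
  { unfold tgt.
    apply is_RInt_Cplus; [apply is_RInt_Cplus; [apply is_RInt_Cplus; [apply is_RInt_Cplus|]|]|].
    all: apply is_RInt_Cscal; apply HQ. }
  assert (Hpt : forall u, f' u = tgt u).
  { intros u. unfold f', tgt, Q, dp.
    pose proof (Rz_euler n m (W u) Hn) as E. unfold Kop in E |- *.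
    assert (Xi : xi (W u) = cxi + RtoC u * xi d).
    { unfold cxi, W, rq, vadd, vscal, xi, d; apply injective_projections; simpl; field. }
    assert (Et : eta (W u) = ceta + RtoC u * eta d).
    { unfold ceta, W, rq, vadd, vscal, eta, d; apply injective_projections; simpl; field. }
    assert (Zz : RtoC (vz (W u)) = cz + RtoC u * RtoC (vz d)).
    { unfold cz, W, rq, vadd, vscal, d; apply injective_projections; simpl; ring. }
    rewrite Xi, Et, Zz in E.
    apply (lc1 _ _ (- RtoC (u ^ b * (1 - u) ^ c)%R) _ _ E).
    unfold bb, cc in *. clear - Hn.
    destruct c as [|c'].
    - change (INR 0) with 0%R. cbn [pow pred Nat.sub].
      rewrite ?S_INR. repeat first [rewrite RtoC_mult | rewrite RtoC_plus | rewrite RtoC_minus]. ring.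
    - replace (S c' - 1)%nat with c' by lia. cbn [pow pred].
      rewrite ?S_INR. repeat first [rewrite RtoC_mult | rewrite RtoC_plus | rewrite RtoC_minus]. ring. }
  assert (Hint : F 1%R - F 0%R =
      RtoC (IZR n + INR b + INR c + 1) * j n m b c
      + (- cc) * j n m b (c - 1)%nat
      + (- (Ci * cxi)) * j (n - 1)%Z (m - 1)%Z b c
      + (- (Ci * ceta)) * j (n - 1)%Z (m + 1)%Z b c
      + cz * j (n - 1)%Z m b c).
  { apply (is_RInt_C_uniq f'); auto. eapply is_RInt_ext; [|exact Htgt]. intros; symmetry; apply Hpt. }
  assert (Hq : F 1%R - F 0%R = qval v1 ru rv n m b c).
  { unfold F, qval, Qf, W. rewrite solidR_Rz. replace (1 - 1)%R with 0%R by ring.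
    replace (1 - 0)%R with 1%R by ring. rewrite !pow1. cbn [pow].
    rewrite !RtoC_mult. ring. }
  rewrite Hq in Hint.
  unfold cxi, ceta, cz in *.
  apply (lc3 _ _ (-1) _ _ (- bb * j n m (b - 1)%nat c) _ _ (- cc * j n m b (c - 1)%nat) _ _ Hint Co1 Co2).
  ring.
Qed.
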